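(* Let $G$ be a finite primitive monolithic soluble group. If $G$ is weakly minmax, then the derived length of $G$ is at most $3$.
   Context: A finite group is primitive if it has a core-free maximal subgroup, and monolithic if it has a unique minimal normal subgroup. A subgroup of $G$ is a maximal intersection if it is an intersection of finitely many (at least one) maximal subgroups of $G$; $\mathcal M(G)$ is the poset under inclusion consisting of $G$ and all maximal intersections in $G$. An unrefinable chain in $\mathcal M(G)$ is a chain $K_t<\dots<K_0$ of elements of $\mathcal M(G)$ to which no further element of $\mathcal M(G)$ can be added; its length is $t$. $\mathrm{MinInt}(G)$ and $\mathrm{MaxInt}(G)$ are the minimal and maximal lengths of unrefinable chains in $\mathcal M(G)$. $\alpha(G)$ is the smallest cardinality of a family of maximal subgroups of $G$ whose intersection equals the Frattini subgroup $\Phi(G)$. $G$ is weakly minmax if $\mathrm{MinInt}(G)=\mathrm{MaxInt}(G)=\alpha(G)$. *)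

(* Defs.v *)
From mathcomp Require Import all_boot all_fingroup all_solvable.
Set Implicit Arguments. Unset Strict Implicit. Unset Printing Implicit Defensive.
Local Open Scope group_scope.

Section Defs.
Variable gT : finGroupType.
Implicit Types G H : {set gT}.

Definition primitive_group (G : {group gT}) : bool :=
  [exists M : {group gT}, maximal M G && (gcore M G == 1)].

Definition min_normal (N G : {group gT}) : bool := minnormal N G && (N \subset G).

Definition monolithic (G : {group gT}) : Prop :=
  exists N : {group gT}, min_normal N G /\
    forall N' : {group gT}, min_normal N' G -> N' = N.

Definition max_intersection (G : {group gT}) H : bool :=
  [exists F : {set {group gT}},
     [&& F != set0, [forall M in F, maximal M G] & H == \bigcap_(M in F) (M : {set gT})]].

Definition MI (G : {group gT}) : {set {set gT}} :=
  [set H : {set gT} | (H == G) || max_intersection G H].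

Definition MI_chain (G : {group gT}) (C : {set {set gT}}) : bool :=
  (C \subset MI G) &&
  [forall H in C, forall K in C, (H \subset K) || (K \subset H)].

Definition unrefinable_chain (G : {group gT}) (C : {set {set gT}}) : bool :=
  MI_chain G C &&
  [forall H in MI G, (H \notin C) ==> ~~ MI_chain G (H |: C)].

Definition chain_length (C : {set {set gT}}) : nat := (#|C|).-1.

(* MinInt(G): minimal length of an unrefinable chain (the default #|MI G| exceeds
   every chain length, and unrefinable chains always exist). *)
Definition MinInt (G : {group gT}) : nat :=
  \big[minn/#|MI G|]_(C : {set {set gT}} | unrefinable_chain G C) chain_length C.

Definition MaxInt (G : {group gT}) : nat :=
  \max_(C : {set {set gT}} | unrefinable_chain G C) chain_length C.

(* alpha(G): least cardinality of a family of maximal subgroups of G whose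
   intersection is the Frattini subgroup (the empty family's intersection is
   taken to be G; the default #|gT|.+1 is never reached since the family of
   all maximal subgroups works). *)
Definition alpha (G : {group gT}) : nat :=
  \big[minn/#|{group gT}|.+1]_(F : {set {group gT}} |
       [forall M in F, maximal M G] && (G :&: \bigcap_(M in F) (M : {set gT}) == 'Phi(G)))
    #|F|.

Definition weakly_minmax (G : {group gT}) : Prop :=
  MinInt G = MaxInt G /\ MaxInt G = alpha G.

End Defs.

(* Main.v *)
Require Import Defs.
From mathcomp Require Import all_boot all_fingroup all_solvable.
From mathcomp Require Import ssralg finalg zmodp matrix mxalgebra mxrepresentation mxabelem.
From mathcomp Require Import zify.
Set Implicit Arguments. Unset Strict Implicit. Unset Printing Implicit Defensive.
Local Open Scope group_scope.

Lemma abelian_irr_cyclic (gT : finGroupType) p (E A : {group gT}) :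
  p.-abelem E -> E :!=: 1 -> A \subset 'N(E) -> minnormal E A -> 'C_A(E) = 1 -> abelian A -> cyclic A.
Proof.
move=> abE ntE nEA minE cA1 abA.
apply: (mx_faithful_irr_abelian_cyclic (abelem_mx_faithful abE ntE nEA cA1)) => //.
exact/abelem_mx_irrP.
Qed.
Lemma bigmin_le (I : finType) (P : pred I) (f : I -> nat) d i :
  P i -> \big[minn/d]_(j | P j) f j <= f i.
Proof.
move=> Pi; rewrite unlock /reducebig.
have : i \in index_enum I by rewrite mem_index_enum.
elim: (index_enum I) => // a r IH; rewrite inE /=.
case/predU1P=> [<- | ir]; first by rewrite Pi geq_minl.
by case: (P a); [apply: leq_trans (geq_minr _ _) _|]; apply: IH.
Qed.

Section Chains.
Variables (gT : finGroupType) (G : {group gT}).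

Lemma MI_sub H : H \in MI G -> H \subset G.
Proof.
rewrite inE => /orP[/eqP-> //|/existsP[F /and3P[nF /forall_inP maxF /eqP->]]].
have [M FM] := set0Pn _ nF.
apply: subset_trans (bigcap_inf _ FM) _.
by case/maxgroupp/andP: (maxF M FM).
Qed.

Lemma MI_Phi H : H \in MI G -> 'Phi(G) \subset H.
Proof.
rewrite inE => /orP[/eqP-> |/existsP[F /and3P[nF /forall_inP maxF /eqP->]]].
  exact: Phi_sub.
by apply/bigcapsP=> M FM; apply: Phi_sub_max; apply: maxF.
Qed.

Lemma max_MI (M : {group gT}) : maximal M G -> (M : {set gT}) \in MI G.
Proof.
move=> maxM; rewrite inE; apply/orP; right; apply/existsP; exists [set M].
apply/and3P; split.
- by apply/set0Pn; exists M; rewrite inE.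
- by apply/forall_inP=> L /set1P->.
- by rewrite big_set1.
Qed.

Lemma MI_capM H (M : {group gT}) : H \in MI G -> maximal M G -> H :&: M \in MI G.
Proof.
move=> MIH maxM; move: MIH; rewrite inE => /orP[/eqP-> |].
  rewrite (setIidPr _) ?max_MI //; by case/maxgroupp/andP: maxM.
case/existsP=> F /and3P[nF /forall_inP maxF /eqP->].
rewrite inE; apply/orP; right; apply/existsP; exists (M |: F).
apply/and3P; split.
- by apply/set0Pn; exists M; rewrite setU11.
- by apply/forall_inP=> L /setU1P[->|] //; apply: maxF.
- rewrite eqEsubset; apply/andP; split.
    apply/bigcapsP=> L /setU1P[-> | FL]; first exact: subsetIr.
    by apply: subset_trans (subsetIl _ _) _; apply: bigcap_inf.
  rewrite subsetI; apply/andP; split; last by apply: bigcap_inf; rewrite setU11.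
  by apply/bigcapsP=> L FL; apply: bigcap_inf; rewrite setU1r.
Qed.

Lemma Phi_MI : G :!=: 1 -> 'Phi(G) \in MI G.
Proof.
move=> ntG; rewrite inE; apply/orP; right; apply/existsP.
exists [set M : {group gT} | maximal M G].
have [M0 maxM0] : exists M : {group gT}, maximal M G.
  have [eq1 | [M maxM _]] := maximal_exists (sub1G G).
    by case/eqP: ntG; rewrite -eq1.
  by exists M.
apply/and3P; split.
- by apply/set0Pn; exists M0; rewrite inE.
- by apply/forall_inP=> L; rewrite inE.
- rewrite eqEsubset; apply/andP; split.
    by apply/bigcapsP=> L; rewrite inE; apply: Phi_sub_max.
  rewrite /Frattini; apply/bigcapsP=> L /orP[/eqP-> | maxL].
    apply: subset_trans (bigcap_inf _ _) _; first by rewrite inE; exact: maxM0.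
    by case/maxgroupp/andP: maxM0.
  by apply: bigcap_inf; rewrite inE.
Qed.

Definition cmp (H K : {set gT}) := (H \subset K) || (K \subset H).

Lemma chain_cmp C H K : MI_chain G C -> H \in C -> K \in C -> cmp H K.
Proof. by case/andP=> _ /forall_inP/(_ H) h CH CK; move/forall_inP: (h CH) => /(_ K CK). Qed.

Lemma chain_MI C H : MI_chain G C -> H \in C -> H \in MI G.
Proof. by case/andP=> /subsetP sC _; apply: sC. Qed.

Lemma chain_add C H : MI_chain G C -> H \in MI G ->
  (forall Z, Z \in C -> cmp H Z) -> MI_chain G (H |: C).
Proof.
move=> chC MIH cH; apply/andP; split.
  by apply/subsetP=> Z /setU1P[->|]; [|apply: chain_MI].
apply/forall_inP=> A /setU1P[-> | CA]; apply/forall_inP=> B /setU1P[-> | CB].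
- by rewrite /cmp subxx.
- exact: cH.
- by rewrite orbC; apply: cH.
- exact: chain_cmp chC CA CB.
Qed.

Lemma unref_add C H : unrefinable_chain G C -> H \in MI G ->
  (forall Z, Z \in C -> cmp H Z) -> H \in C.
Proof.
case/andP=> chC /forall_inP/(_ H) unr MIH cH; apply/negPn/negP=> nCH.
by move: (unr MIH); rewrite nCH /= (chain_add chC MIH cH).
Qed.

Local Notation below C X := [set Y in C | Y \proper X].

Lemma chain_Phi C X : G :!=: 1 -> unrefinable_chain G C -> X \in C ->
  exists2 Fc : {set {group gT}}, {in Fc, forall M : {group gT}, maximal M G} &
    (#|Fc| <= #|below C X|) && (X :&: \bigcap_(M in Fc) (M : {set gT}) \subset 'Phi(G)).
Proof.
move=> ntG unC; have chC : MI_chain G C by case/andP: unC.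
move: {2}_.+1 (ltnSn #|below C X|) => n; elim: n X => // n IH X ltBn CX.
have MIX := chain_MI chC CX.
case sXP: (X \subset 'Phi(G)).
  exists set0; first by move=> M; rewrite inE.
  by rewrite cards0 /=; apply: subset_trans (subsetIl _ _) sXP.
have PhiC : 'Phi(G) \in C.
  apply: unref_add unC (Phi_MI ntG) _ => Z CZ.
  by rewrite /cmp MI_Phi ?(chain_MI chC CZ).
have BPhi : 'Phi(G) \in below C X by rewrite inE PhiC properE MI_Phi // sXP.
case: (arg_maxnP (P := fun Y => Y \in below C X) (fun Y : {set gT} => #|Y|) BPhi) => Y BY maxY.
move: (BY) => /=; rewrite inE => /andP[CY pYX]. 
have sBY Z : Z \in below C X -> Z \subset Y.
  move=> BZ; move: (BZ); rewrite inE => /andP[CZ _].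
  case/orP: (chain_cmp chC CZ CY) => // sYZ; apply/negPn/negP=> nZY.
  have : #|Z| <= #|Y| := maxY Z BZ; rewrite leqNgt => /negP; apply.
  by apply: proper_card; rewrite properE sYZ nZY.
have MIY := chain_MI chC CY.
have YneG : Y != G.
  apply: contraTneq pYX => ->; rewrite properE negb_and negbK MI_sub //.
  by rewrite orbT.
move: MIY; rewrite inE (negPf YneG) /= => /existsP[FY /and3P[_ /forall_inP maxFY /eqP defY]].
have [M FYM nXM] : exists2 M, M \in FY & ~~ (X \subset M).
  apply/forall_inPn/negP=> /forall_inP allX.
  move: pYX; rewrite properE => /andP[_]; case/negP; rewrite defY.
  by apply/bigcapsP=> L FL; apply: allX.
have maxM := maxFY M FYM.
have sYM : Y \subset M by rewrite defY; apply: bigcap_inf.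
have sYX' : Y \subset X :&: M by rewrite subsetI sYM (proper_sub pYX).
have CX' : X :&: M \in C.
  apply: unref_add unC (MI_capM MIX maxM) _ => Z CZ.
  case sXZ: (X \subset Z); first by rewrite /cmp (subset_trans (subsetIl _ _) sXZ).
  have := chain_cmp chC CX CZ; rewrite /cmp sXZ /= => sZX.
  have BZ : Z \in below C X by rewrite inE CZ properE sZX sXZ.
  by rewrite /cmp (subset_trans (sBY Z BZ) sYX') orbT.
have sX'Y : X :&: M \subset Y.
  apply: sBY; rewrite inE CX' properE subsetIl /= subsetI subxx /=. done.
have ltBY : #|below C Y| < #|below C X|.
  apply: proper_card; rewrite properE; apply/andP; split.
    apply/subsetP=> Z; rewrite !inE => /andP[-> pZY] /=.
    by apply: proper_trans pZY pYX.
  apply/subsetPn; exists Y => //; rewrite inE CY /= properE subxx. done.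
have [FcY maxFcY /andP[cardY phiY]] := IH Y (leq_trans ltBY (ltnSE ltBn)) CY.
exists (M |: FcY).
  by move=> L /setU1P[->|]; [|apply: maxFcY].
apply/andP; split.
  by rewrite cardsU1; apply: leq_trans (leq_add (leq_b1 _) cardY) _; rewrite add1n.
apply: subset_trans phiY; rewrite subsetI; apply/andP; split.
  apply: subset_trans sX'Y; rewrite setIS //; apply: bigcap_inf; exact: setU11.
rewrite subIset //; apply/orP; right.
by apply/bigcapsP=> L FL; apply: bigcap_inf; rewrite setU1r.
Qed.


Lemma MaxInt_ge C : unrefinable_chain G C -> chain_length C <= MaxInt G.
Proof. by move=> unC; rewrite /MaxInt; apply: (leq_bigmax_cond (P := fun C => unrefinable_chain G C)). Qed.

Lemma alpha_le (F : {set {group gT}}) : {in F, forall M : {group gT}, maximal M G} ->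
  G :&: \bigcap_(M in F) (M : {set gT}) \subset 'Phi(G) -> alpha G <= #|F|.
Proof.
move=> maxF sP; apply: bigmin_le; apply/andP; split; first by apply/forall_inP.
rewrite eqEsubset sP subsetI Phi_sub /=.
by apply/bigcapsP=> M FM; apply: Phi_sub_max; apply: maxF.
Qed.

Lemma extend C0 : MI_chain G C0 -> exists2 C, unrefinable_chain G C & C0 \subset C.
Proof.
move=> ch0.
have P0 : MI_chain G C0 && (C0 \subset C0) by rewrite ch0 subxx.
case: (arg_maxnP (P := fun C => MI_chain G C && (C0 \subset C)) (fun C => #|C|) P0).
move=> C /andP[chC sC0] maxC; exists C => //; apply/andP; split => //.
apply/forall_inP=> H MIH; apply/implyP=> nCH; apply/negP=> chHC.
have : #|H |: C| <= #|C|.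
  by apply: maxC; rewrite chHC (subset_trans sC0) // subsetUr.
by rewrite cardsU1 nCH ltnn.
Qed.

Lemma no_refine (M M2 K : {group gT}) : G :!=: 1 -> MaxInt G = alpha G ->
  maximal M G -> maximal M2 G -> (K : {set gT}) \in MI G ->
  (M :&: M2) \proper K -> K \proper M -> False.
Proof.
move=> ntG eqMA maxM maxM2 MIK pXK pKM.
set X := M :&: M2 in pXK.
have pMG : M \proper G := maxgroupp maxM.
have MIX : X \in MI G by apply: MI_capM (max_MI maxM) maxM2.
have eqX : X = M :&: M2 by [].
clearbody X.
have pXM := proper_trans pXK pKM; have pKG := proper_trans pKM pMG.
have pXG := proper_trans pXM pMG.
have [sXK sKM sMG] := And3 (proper_sub pXK) (proper_sub pKM) (proper_sub pMG).
have [sXM sKG sXG] := And3 (proper_sub pXM) (proper_sub pKG) (proper_sub pXG).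
pose C0 := (G : {set gT}) |: ((M : {set gT}) |: ((K : {set gT}) |: [set X])).
have memC0 A : A \in C0 -> [\/ A = G, A = M, A = K | A = X].
  by rewrite !inE => /or4P[] /eqP->; [constructor 1|constructor 2|constructor 3|constructor 4].
have ch0 : MI_chain G C0.
  apply/andP; split.
    apply/subsetP=> A /memC0[] ->; [by rewrite inE eqxx | exact: max_MI | exact: MIK | exact: MIX].
  apply/forall_inP=> A /memC0 hA; apply/forall_inP=> B /memC0 hB.
  by case: hA => ->; case: hB => ->; rewrite ?subxx ?sXK ?sKM ?sMG ?sXM ?sKG ?sXG ?orbT.
have [C unC sC0C] := extend ch0.
have chC : MI_chain G C by case/andP: unC.
have CX : X \in C by apply: (subsetP sC0C); rewrite /C0 !inE eqxx !orbT.
have [Fc maxFc /andP[cardFc phiFc]] := chain_Phi ntG unC CX.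
have leA : alpha G <= #|(M |: (M2 |: Fc))|.
  apply: alpha_le.
    by move=> L /setU1P[->|/setU1P[->|]] //; apply: maxFc.
  apply: subset_trans phiFc; rewrite subsetI; apply/andP; split.
    rewrite eqX subsetI; apply/andP; split.
      by rewrite subIset // orbC; apply/orP; left; apply: bigcap_inf; rewrite setU11.
    by rewrite subIset // orbC; apply/orP; left; apply: bigcap_inf; rewrite setU1r ?setU11.
  rewrite subIset // orbC; apply/orP; left.
  by apply/bigcapsP=> L FL; apply: bigcap_inf; rewrite !setU1r.
have cF : #|(M |: (M2 |: Fc))| <= #|Fc| + 2.
  rewrite !cardsU1; apply: leq_trans (leq_add (leq_b1 _) (leq_add (leq_b1 _) (leqnn #|Fc|))) _.
  by rewrite addnA addnC.
pose B := [set Y in C | Y \proper X].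
have notB (A : {set gT}) : X \subset A -> A \notin B.
  by move=> sXA; rewrite inE properE sXA /= !andbF.
have neq (A1 A2 : {set gT}) : A1 \proper A2 -> (A2 == A1) = false.
  by rewrite properEneq eq_sym => /andP[/negbTE].
have sub : (G : {set gT}) |: ((M : {set gT}) |: ((K : {set gT}) |: (X |: B))) \subset C.
  apply/subsetP=> A; rewrite !inE => /or4P[] .
  - by move/eqP->; apply: (subsetP sC0C); rewrite /C0 !inE eqxx.
  - by move/eqP->; apply: (subsetP sC0C); rewrite /C0 !inE eqxx orbT.
  - by move/eqP->; apply: (subsetP sC0C); rewrite /C0 !inE eqxx !orbT.
  - by case/orP=> [/eqP->|/andP[] //]; apply: (subsetP sC0C); rewrite /C0 !inE eqxx !orbT.
have cardC := subset_leq_card sub.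
have n1 : X \notin B by rewrite notB.
have n2 : (K : {set gT}) \notin X |: B.
  by rewrite in_setU1 (negbTE (notB _ sXK)) (neq _ _ pXK).
have n3 : (M : {set gT}) \notin (K : {set gT}) |: (X |: B).
  by rewrite !in_setU1 (negbTE (notB _ sXM)) (neq _ _ pXM) (neq _ _ pKM).
have n4 : (G : {set gT}) \notin (M : {set gT}) |: ((K : {set gT}) |: (X |: B)).
  by rewrite !in_setU1 (negbTE (notB _ sXG)) (neq _ _ pXG) (neq _ _ pKG) (neq _ _ pMG).
rewrite !cardsU1 n1 n2 n3 n4 in cardC.
move: cardC cF leA cardFc (MaxInt_ge unC); rewrite /chain_length eqMA /=.
move: #|C| #|B| #|Fc| #|M |: (M2 |: Fc)| (alpha G) => c b f f' a.
clear -c b f f' a.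
lia.
Qed.

End Chains.

Lemma cyclic_der1_cent (gT : finGroupType) (F M : {group gT}) :
  cyclic F -> M \subset 'N(F) -> M^`(1) \subset 'C(F).
Proof.
case/cyclicP=> a ->{F} nFM.
rewrite cent_cycle /= derg1 gen_subG; apply/subsetP=> _ /imset2P[x y Mx My ->].
have ex z : z \in M -> exists i, a ^ z = a ^+ i.
  move=> Mz; have: a ^ z \in <[a]> by rewrite memJ_norm ?cycle_id ?(subsetP nFM).
  by case/cycleP=> i ->; exists i.
have [i ei] := ex x Mx; have [j ej] := ex y My.
have [i' ei'] := ex _ (groupVr Mx); have [j' ej'] := ex _ (groupVr My).
apply/cent1P; apply: commute_sym; apply/commgP/conjg_fixP.
have ->: [~ x, y] = x^-1 * y^-1 * x * y by rewrite /commg /conjg !mulgA.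
have e: a ^ (x^-1 * x * (y^-1 * y)) = a by rewrite !mulVg mulg1 conjg1.
rewrite !conjgM !(conjXg, ei, ej, ei', ej') -!expgM in e *.
rewrite -{2}e; congr (_ ^+ _); lia.
Qed.
Section Prim.
Variables (gT : finGroupType) (G M N : {group gT}).
Hypotheses (solG : solvable G) (maxM : maximal M G) (core1 : gcore M G = 1)
  (minN : minnormal N G) (sNG : N \subset G).

Let sMG : M \subset G. Proof. by case/maxgroupp/andP: maxM. Qed.
Let nNG : G \subset 'N(N). Proof. by case/mingroupp/andP: minN. Qed.
Let ntN : N :!=: 1. Proof. by case/mingroupp/andP: minN. Qed.
Let abN : abelian N.
Proof. by have [_ _ /is_abelemP[p _ /abelem_abelian]] := minnormal_solvable minN sNG solG. Qed.
Let nNM : M \subset 'N(N). Proof. exact: subset_trans sMG nNG. Qed.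

Let nsNM : ~~ (N \subset M).
Proof.
apply: contra ntN => sNM; rewrite -subG1 -core1; exact: gcore_max.
Qed.

Lemma prim_defG : N * M = G.
Proof.
have sNMG : N <*> M \subset G by rewrite join_subG sNG.
case/maxgroupP: maxM => _ /(_ (N <*> M)%G) maxM'.
apply/eqP; rewrite eqEsubset -norm_joinEr // sNMG /=.
apply/negPn/negP=> nG.
have: N <*> M \proper G by rewrite properEneq sNMG andbT; apply: contra nG => /eqP ->.
move/maxM'/(_ (joing_subr _ _)) => eqNM; case/negP: nsNM.
by rewrite -eqNM joing_subl.
Qed.

Let cN_norm (A : {set gT}) : A \subset N -> N \subset 'N(A).
Proof. move=> sAN; apply: cents_norm; rewrite centsC; exact: subset_trans sAN abN. Qed.

Lemma prim_tiNM : N :&: M = 1.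
Proof.
apply/eqP; rewrite -subG1 -core1; apply: gcore_max; first exact: subsetIr.
by rewrite -prim_defG mul_subG ?cN_norm ?subsetIl // normsI.
Qed.

Lemma prim_cMN : 'C_M(N) = 1.
Proof.
apply/eqP; rewrite -subG1 -core1; apply: gcore_max; first exact: subsetIl.
rewrite -prim_defG mul_subG //.
  by apply: cents_norm; rewrite centsC subsetIr.
by rewrite normsI // norms_cent.
Qed.

Lemma prim_Z (A : {group gT}) v : M \subset 'N(A) -> A \subset M ->
  v \in N -> v != 1 -> A \subset 'C[v] -> A :=: 1.
Proof.
move=> nAM sAM Nv ntv cAv.
have nCG : G \subset 'N('C_N(A)).
  by rewrite -prim_defG mul_subG ?cN_norm ?subsetIl // normsI // norms_cent.
have ntC : 'C_N(A) != 1.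
  by apply/trivgPn; exists v => //; rewrite inE Nv -sub_cent1.
case/mingroupP: minN => _ /(_ ('C_N(A))%G) minN'.
have eq : 'C_N(A) :=: N by apply: minN'; [rewrite /= ntC | exact: subsetIl].
by apply/eqP; rewrite -subG1 -prim_cMN subsetI sAM centsC -eq subsetIr.
Qed.

Lemma prim_conj w : w \in N -> M :&: M :^ w^-1 = 'C_M[w].
Proof.
move=> Nw; apply/setP=> x; rewrite !in_setI mem_conjgV.
case Mx: (x \in M) => //=.
have Gx : x \in G by exact: (subsetP sMG).
rewrite conjg_mulR groupMl //.
have Nc : [~ x, w] \in N.
  by rewrite commgEr groupM // memJ_norm ?groupV // (subsetP nNG).
apply/idP/idP=> [Mc | /cent1P cxw].
  have : [~ x, w] \in N :&: M by rewrite inE Nc.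
  by rewrite prim_tiNM => /set1P/eqP/commgP/cent1P.
by move/commgP/eqP: cxw => ->.
Qed.

Lemma max_join (D A H : {group gT}) : maximal D H -> A \subset H -> ~~ (A \subset D) ->
  A <*> D = H.
Proof.
move=> maxD sAH nAD; have sDH : D \subset H by case/maxgroupp/andP: maxD.
have sADH : A <*> D \subset H by rewrite join_subG sAH.
case/maxgroupP: maxD => _ /(_ (A <*> D)%G) maxD'.
apply/eqP; rewrite eqEsubset sADH /=.
apply/negPn/negP=> nG.
have: A <*> D \proper H by rewrite properEneq sADH andbT; apply: contra nG => /eqP ->.
move/maxD'/(_ (joing_subr _ _)) => eqAD; case/negP: nAD.
by rewrite -eqAD joing_subl.
Qed.


Lemma prim_derM :
  (M :!=: 1 -> forall w, w \in N -> w != 1 -> maximal 'C_M[w] M) -> M^`(2) = 1.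
Proof.
move=> hmax.
have [M1 | ntM] := eqVneq (M : {set gT}) 1.
  by apply/trivgP; rewrite -M1 der_sub.
have solM : solvable M := solvableS sMG solG.
have [F minF sFM] := @mingroup_exists gT (fun H : {group gT} => (H :!=: 1) && (M \subset 'N(H))) M
   (introT andP (conj ntM (normG M))).
have [nFM ntF /is_abelemP[q _ /abelem_abelian abF]] := minnormal_solvable minF sFM solM.
have key w : w \in N -> w != 1 -> F * 'C_M[w] = M /\ F :&: 'C_M[w] = 1.
  move=> Nw ntw; have maxD := hmax ntM w Nw ntw.
  have sDM : 'C_M[w] \subset M := subsetIl _ _.
  have nsFD : ~~ (F \subset 'C_M[w]).
    apply: contra ntF => sFD; apply/eqP.
    apply: (prim_Z nFM sFM Nw ntw); exact: subset_trans sFD (subsetIr _ _).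
  have defM : F * 'C_M[w] = M.
    by rewrite -norm_joinEr ?(subset_trans sDM nFM) //; apply: max_join.
  split=> //.
  apply: (prim_Z (v := w)) => //.
  - rewrite -{1}defM mul_subG //.
      by apply: cents_norm; rewrite centsC; apply: subset_trans (subsetIl _ _) abF.
    by rewrite normsI // (subset_trans sDM nFM).
  - by rewrite subIset ?sFM.
  - exact: subset_trans (subsetIr _ _) (subsetIr _ _).
have [v Nv ntv] := trivgPn _ ntN.
have [defM tiFD] := key v Nv ntv.
set D := 'C_M[v] in defM tiFD.
have sDM : D \subset M := subsetIl _ _.
have cycF : cyclic F.
  have [pN _ abelN] : exists2 p, prime p & p.-abelem N.
    by have [_ _ /is_abelemP] := minnormal_solvable minN sNG solG.
  have [U minU sUN] := @mingroup_exists gT (fun H : {group gT} => (H :!=: 1) && (F \subset 'N(H))) N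
     (introT andP (conj ntN (subset_trans sFM nNM))).
  have [ntU nUF] := andP (mingroupp minU).
  apply: (abelian_irr_cyclic (abelemS sUN abelN) ntU nUF minU _ abF).
  have [u Uu ntu] := trivgPn _ ntU.
  have Nu := subsetP sUN u Uu.
  have [_ tiu] := key u Nu ntu.
  apply/trivgP; rewrite -tiu; apply/subsetP=> x /setIP[Fx cUx].
  rewrite !in_setI Fx (subsetP sFM) //=; apply/cent1P; exact: (centP cUx u Uu).
have cDF1 : 'C_D(F) = 1.
  apply: (prim_Z (v := v)) => //.
  - rewrite -defM mul_subG //.
      by apply: cents_norm; rewrite centsC subsetIr.
    by rewrite normsI // norms_cent // (subset_trans sDM nFM).
  - by rewrite subIset ?sDM.
  - exact: subset_trans (subsetIl _ _) (subsetIr _ _).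
have sM'F : M^`(1) \subset F.
  apply/subsetP=> x M'x.
  have Mx : x \in M := subsetP (der_sub 1 M) x M'x.
  have cFx : x \in 'C(F) := subsetP (cyclic_der1_cent cycF nFM) x M'x.
  move: Mx; rewrite -defM => /mulsgP[f d Ff Dd exfd].
  have cFd : d \in 'C_D(F).
    rewrite inE Dd /= (_ : d = f^-1 * x); last by rewrite exfd mulKg.
    by rewrite groupM // groupV (subsetP abF).
  by move: cFd; rewrite cDF1 => /set1P dd; rewrite exfd dd mulg1.
apply/trivgP.
apply: subset_trans (dergS 1 sM'F) _.
by rewrite (derG1P abF).
Qed.


Lemma prim_NK (K : {group gT}) : maximal K M ->
  maximal (N <*> K) G /\ M :&: (N <*> K) = K.
Proof.
move=> maxK; have pKM : K \proper M := maxgroupp maxK.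
have sKM := proper_sub pKM.
have nNK : K \subset 'N(N) := subset_trans sKM nNM.
have eqK : M :&: (N <*> K) = K.
  rewrite norm_joinEr // -group_modr // setIC prim_tiNM mul1g //.
split=> //; apply/maxgroupP; split.
  rewrite properEneq join_subG sNG (subset_trans sKM sMG) andbT.
  rewrite andbT; apply/eqP=> eqG0.
  have eqG : (N <*> K : {set gT}) = G by rewrite -[LHS]/(gval (N <*> K)%G) eqG0.
  by move: pKM; rewrite -eqK eqG (setIidPl sMG) properE subxx andbF.
move=> H pHG sNKH; have sHG := proper_sub pHG.
have sNH : N \subset H := subset_trans (joing_subl _ _) sNKH.
have sKH : K \subset H := subset_trans (joing_subr _ _) sNKH.
have sKHM : K \subset M :&: H by rewrite subsetI sKM.
have defH : N * (M :&: H) = H.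
  by rewrite group_modl // prim_defG (setIidPr sHG).
have [eqMH | pMH] := eqVproper (subsetIl M H).
  move: pHG; rewrite -defH eqMH prim_defG properE subxx andbF //.
case/maxgroupP: maxK => _ /(_ (M :&: H)%G pMH sKHM) /= eqK'.
by rewrite -defH eqK' norm_joinEr.
Qed.

Lemma prim_hmax : G :!=: 1 -> MaxInt G = alpha G ->
  M :!=: 1 -> forall w, w \in N -> w != 1 -> maximal 'C_M[w] M.
Proof.
move=> ntG eqMA ntM w Nw ntw.
have Gw : w^-1 \in G by rewrite groupV (subsetP sNG).
have maxM2 : maximal (M :^ w^-1)%G G.
  by rewrite -(conjGid Gw) maximalJ.
have [eqCM | [K maxK sCK]] := maximal_exists (subsetIl M 'C[w]).
  case/eqP: ntM; apply: (prim_Z (normG M) (subxx M) Nw ntw).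
  by rewrite -eqCM subsetIr.
have [eqCK | pCK] := eqVproper sCK; first by rewrite eqCK.
have [maxNK eqK] := prim_NK maxK.
have MIK : (K : {set gT}) \in MI G by rewrite -eqK; apply: MI_capM (max_MI maxM) maxNK.
case: (no_refine ntG eqMA maxM maxM2 MIK _ (maxgroupp maxK)).
by rewrite prim_conj.
Qed.

Lemma prim_der3 : G :!=: 1 -> MaxInt G = alpha G -> G^`(3) = 1.
Proof.
move=> ntG eqMA.
have dM := prim_derM (prim_hmax ntG eqMA).
have sG2N : G^`(2) \subset N.
  have nG2 : G^`(2) \subset 'N(N) := subset_trans (der_sub 2 G) nNG.
  rewrite -quotient_sub1 // quotient_der //.
  rewrite -prim_defG quotientMidl -quotient_der // dM quotient1 //.
apply/trivgP; apply: subset_trans (dergS 1 sG2N) _.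
by rewrite (derG1P abN).
Qed.

End Prim.

Theorem mainTheorem9 (gT : finGroupType) (G : {group gT}) :
  primitive_group G -> monolithic G -> solvable G -> weakly_minmax G ->
  G^`(3) = 1.
Proof.
move=> /existsP[M /andP[maxM /eqP core1]] [N [/andP[minN sNG] _]] solG [_ eqMA].
have ntG : G :!=: 1.
  rewrite -proper1G; apply: sub_proper_trans (sub1G M) (maxgroupp maxM).
exact: (prim_der3 solG maxM core1 minN sNG ntG eqMA).
Qed.
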